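(* Let $\{A_n\}_{n\geqslant 1}$ be i.i.d. nonnegative random variables with Laplace–Stieltjes transform $\alpha(s)=\mathbb{E}[e^{-sA_1}]$, and let $\{B_n\}_{n\geqslant 1}$ be i.i.d. exponentially distributed with rate $\mu>0$, independent of $\{A_n\}$. Let $W_1=0$ and $W_{n+1}=\max\{0,\,B_{n+1}-A_n-W_n\}$ for $n\geqslant 1$, and let $C=\inf\{k\geqslant 1: W_{1+k}=0\}$ be the length of a regeneration cycle. Then $$\mathbb{P}[C=n]=\begin{cases}1-\alpha(\mu), & n=1,\\[2pt] \left[1-\tfrac12\alpha(\mu)\right]\left[\tfrac12\alpha(\mu)\right]^{n-2}\alpha(\mu), & n\geqslant 2.\end{cases}$$ *)

(* Defs.v *)
From HB Require Import structures.
From mathcomp Require Import all_boot all_order all_algebra.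
From mathcomp Require Import all_classical all_reals all_analysis.
Set Implicit Arguments. Unset Strict Implicit. Unset Printing Implicit Defensive.
Import Order.TTheory GRing.Theory Num.Theory Num.Def.
Local Open Scope classical_set_scope.
Local Open Scope ring_scope.

Definition mutually_independent d (T : measurableType d) (R : realType)
  (P : probability T R) (I : eqType) (D : set I) (X : I -> {RV P >-> R}) :=
  forall (J : seq I) (S : I -> set R), uniq J ->
    (forall i, i \in J -> D i) ->
    (forall i, i \in J -> measurable (S i)) ->
    P (\bigcap_(i in [set` J]) (X i @^-1` S i)) =
    (\big[*%E/1%E]_(i <- J) P (X i @^-1` S i))%E.

Definition AB_family d (T : measurableType d) (R : realType) (P : probability T R)
  (A B : nat -> {RV P >-> R}) : nat + nat -> {RV P >-> R} :=
  fun i => match i with inl n => A n | inr n => B n end.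

Definition idx (i : nat + nat) : nat := match i with inl n => n | inr n => n end.

(* Laplace-Stieltjes transform  s |-> E[exp(-s X)]  (real-valued; finite for X >= 0, s >= 0) *)
Definition LST d (T : measurableType d) (R : realType) (P : probability T R)
  (X : T -> R) (s : R) : R :=
  fine ('E_P[fun w => expR (- s * X w)])%E.

(* w k = W_{k+1}: W_1 = 0, W_{k+2} = max(0, B_{k+2} - A_{k+1} - W_{k+1}) *)
Fixpoint Wshift (R : realType) (T : Type) (A B : nat -> T -> R) (x : T) (k : nat) : R :=
  match k with
  | 0 => 0
  | k'.+1 => maxr 0 (B k'.+2 x - A k'.+1 x - Wshift A B x k')
  end.

(* W_n for n >= 1 (W_0 is unused and set to 0) *)
Definition W (R : realType) (T : Type) (A B : nat -> T -> R) (x : T) (n : nat) : R :=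
  Wshift A B x n.-1.

Definition cycle_len_eq (R : realType) (T : Type) (A B : nat -> T -> R) (n : nat) : set T :=
  [set x | W A B x n.+1 = 0 /\ forall k, (1 <= k < n)%N -> W A B x k.+1 <> 0].

(* Main.v *)
Require Import Defs.
From HB Require Import structures.
From mathcomp Require Import all_boot all_order all_algebra.
From mathcomp Require Import all_classical all_reals all_analysis.
From mathcomp Require Import measurable_realfun.
From mathcomp Require Import ring lra zify.
Import Order.TTheory GRing.Theory Num.Theory Num.Def.
Local Open Scope classical_set_scope.
Local Open Scope ring_scope.
Set Implicit Arguments. Unset Strict Implicit. Unset Printing Implicit Defensive.

Section gen.
Context d (T : measurableType d) (R : realType) (P : probability T R).
Local Open Scope ereal_scope.

Lemma indep_gen (E : set T) (mE : measurable E) (G : set (set T))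
  (GI : setI_closed G) (Gm : G `<=` measurable)
  (h : forall A, G A -> P (E `&` A) = P E * P A) :
  forall A, <<s G >> A -> P (E `&` A) = P E * P A.
Proof.
pose H := [set A | measurable A /\ P (E `&` A) = P E * P A].
suff : <<s G >> `<=` H by move=> sub A /sub[].
apply: lambda_system_subset => //; last first.
  by move=> A GA; split; [exact: Gm|exact: h].
apply/dynkin_lambda_system; split.
- by split => //; rewrite setIT probability_setT mule1.
- move=> A [mA hA]; split; first exact: measurableC.
  have eD : P (E `\` A) = P E - P (E `&` A).
    rewrite measureD //.
    by apply: (le_lt_trans (probability_le1 P mE)); exact: ltey.
  rewrite probability_setC // -setDE eD.
  have fE : P E \is a fin_num by rewrite fin_num_measure.
  have fA : P A \is a fin_num by rewrite fin_num_measure.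
  rewrite hA muleBr ?mule1 //.
- move=> F tF hF; split.
    by apply: bigcupT_measurable => k; have [] := hF k.
  have mF k : measurable (F k) by have [] := hF k.
  rewrite setI_bigcupr measure_bigcup //=; try (by move=> k _; exact: measurableI);
    try (by apply: trivIset_setIl; exact: tF).
  rewrite [in RHS]measure_bigcup //=.
  rewrite (eq_eseriesr (fun k _ => (hF k).2)).
  rewrite -(fineK (fin_num_measure P _ mE)) nneseriesZl //.
Qed.

Lemma freeze (Y Z : T -> R) (mY : measurable_fun setT Y) (mZ : measurable_fun setT Z)
  (ind : forall S S', measurable S -> measurable S' ->
     P (Y @^-1` S `&` Z @^-1` S') = P (Y @^-1` S) * P (Z @^-1` S'))
  (g : R * R -> \bar R) : measurable_fun [set: R * R] g -> (forall p, 0 <= g p) ->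
  \int[P]_w g (Y w, Z w) = \int[P]_v (\int[P]_w g (Y w, Z v)).
Proof.
move=> mg g0.
pose Y' : {RV P >-> R} := HB.pack Y (isMeasurableFun.Build _ _ _ _ Y mY).
pose Z' : {RV P >-> R} := HB.pack Z (isMeasurableFun.Build _ _ _ _ Z mZ).
have mV : measurable_fun setT (fun w => (Y w, Z w)) by exact: measurable_fun_pair.
pose V : {RV P >-> (R * R)%type} := HB.pack (fun w => (Y w, Z w)) (isMeasurableFun.Build _ _ _ _ _ mV).
have -> : \int[P]_w g (Y w, Z w) = \int[distribution P V]_p g p.
  by rewrite ge0_integral_distribution.
have E : forall S, measurable S -> distribution P V S = (distribution P Y' \x distribution P Z') S.
  by move=> S mS; apply/esym; apply: product_measure_unique.
rewrite (eq_measure_integral (distribution P Y' \x distribution P Z')); last by move=> S mS _; exact: E.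
rewrite fubini_tonelli2 //.
rewrite ge0_integral_distribution //; last first.
- by move=> z; apply: integral_ge0 => y _; exact: g0.
- exact: measurable_fun_fubini_tonelli_G.
apply: eq_integral => v _ /=.
rewrite /fubini_G ge0_integral_distribution //.
exact: measurable_fun_pair1.
Qed.

End gen.


Section fam.
Context d (T : measurableType d) (R : realType) (P : probability T R).
Variable I : eqType.
Variable Dm : I -> bool.
Variable X : I -> {RV P >-> R}.
Hypothesis indep : mutually_independent Dm X.
Local Open Scope ereal_scope.

Definition rect (L : seq I) (Sf : I -> set R) : set T :=
  \big[setI/setT]_(i <- L) (X i @^-1` Sf i).

Lemma in_rect L Sf x : rect L Sf x <-> forall i, i \in L -> Sf i (X i x).
Proof.
rewrite /rect; elim: L => [|j L IH]; first by rewrite big_nil; split.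
rewrite big_cons; split.
  move=> [xj /IH h] i; rewrite inE => /orP[/eqP->//|]; exact: h.
move=> h; split; first by apply: h; rewrite inE eqxx.
by apply/IH => i iL; apply: h; rewrite inE iL orbT.
Qed.

Lemma rect_bigcap L Sf : rect L Sf = \bigcap_(i in [set` L]) (X i @^-1` Sf i).
Proof.
apply/seteqP; split => x.
  by move=> /in_rect h i iL; exact: h.
by move=> h; apply/in_rect => i iL; exact: h.
Qed.

Lemma rect_meas L Sf : (forall i, measurable (Sf i)) -> measurable (rect L Sf).
Proof. by move=> mS; apply: bigsetI_measurable => i _; exact: measurable_funPTI. Qed.

Lemma rect_prod L Sf : uniq L -> (forall i, i \in L -> Dm i) ->
  (forall i, measurable (Sf i)) ->
  P (rect L Sf) = \big[*%E/1]_(i <- L) P (X i @^-1` Sf i).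
Proof.
by move=> uL DL mS; rewrite rect_bigcap indep.
Qed.

Lemma rect_indep j L S Sf : uniq (j :: L) -> (forall i, i \in j :: L -> Dm i) ->
  measurable S -> (forall i, measurable (Sf i)) ->
  P (X j @^-1` S `&` rect L Sf) = P (X j @^-1` S) * P (rect L Sf).
Proof.
move=> uL DL mS mSf.
pose Sf' := fun i => if i == j then S else Sf i.
have mSf' : forall i, measurable (Sf' i) by move=> i; rewrite /Sf'; case: eqP.
have -> : X j @^-1` S `&` rect L Sf = rect (j :: L) Sf'.
  apply/seteqP; split => x.
    move=> [xS /in_rect xL]; apply/in_rect => i; rewrite inE => /orP[/eqP->|iL].
      by rewrite /Sf' eqxx.
    rewrite /Sf'; case: eqP => [eij|_]; last exact: xL.
    by move: uL; rewrite /= -eij iL.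
  move=> /in_rect h; split.
    by have := h j; rewrite inE eqxx /Sf' eqxx; apply.
  apply/in_rect => i iL; have := h i; rewrite inE iL orbT /Sf'.
  case: eqP => [eij|_]; last by apply.
  by move: uL; rewrite /= -eij iL.
rewrite rect_prod // big_cons {1}/Sf' eqxx rect_prod //; last first.
- by move=> i iL; apply: DL; rewrite inE iL orbT.
- by case/andP: uL.
congr (_ * _); apply: eq_big_seq => i iL; rewrite /Sf'; case: eqP => // eij.
by move: uL; rewrite /= -eij iL.
Qed.

Definition Gsys (L : seq I) : set (set T) :=
  [set E | exists Sf, (forall i, measurable (Sf i)) /\ E = rect L Sf].

Lemma Gsys_meas L : Gsys L `<=` measurable.
Proof. by move=> E [Sf [mS ->]]; exact: rect_meas. Qed.

Lemma Gsys_I L : setI_closed (Gsys L).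
Proof.
move=> E1 E2 [S1 [m1 ->]] [S2 [m2 ->]]; exists (fun i => S1 i `&` S2 i); split.
  by move=> i; exact: measurableI.
apply/seteqP; split => x.
  move=> [/in_rect h1 /in_rect h2]; apply/in_rect => i iL; split; [exact: h1|exact: h2].
move=> /in_rect h; split; apply/in_rect => i iL; have [] := h i iL => //.
Qed.

Definition Lmeas L (Z : T -> R) :=
  measurable_fun (setT : set (g_sigma_algebraType (Gsys L))) (Z : g_sigma_algebraType (Gsys L) -> R).

Lemma Lmeas_pre L Z S : Lmeas L Z -> measurable S -> <<s Gsys L >> (Z @^-1` S).
Proof. by move=> mZ mS; have := mZ measurableT S mS; rewrite setTI. Qed.

Lemma sG_meas L : <<s Gsys L >> `<=` measurable.
Proof.
apply: smallest_sub; first exact: sigma_algebra_measurable.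
exact: Gsys_meas.
Qed.

Lemma Lmeas_T L Z : Lmeas L Z -> measurable_fun setT Z.
Proof.
move=> mZ _ S mS; rewrite setTI; exact: (sG_meas (Lmeas_pre mZ mS)).
Qed.

Lemma Lmeas_X L i : i \in L -> Lmeas L (X i).
Proof.
move=> iL _ S mS; rewrite setTI; apply: sub_sigma_algebra.
exists (fun k => if k == i then S else setT); split.
  by move=> k; case: eqP.
apply/seteqP; split => x.
  move=> Sx; apply/in_rect => k kL; case: eqP => // ->; exact: Sx.
by move=> /in_rect h; have := h i iL; rewrite eqxx.
Qed.

Lemma Lmeas_mono L L' Z : {subset L <= L'} -> Lmeas L Z -> Lmeas L' Z.
Proof.
move=> sub mZ _ S mS; rewrite setTI.
have := Lmeas_pre mZ mS; apply: smallest_sub; first exact: smallest_sigma_algebra.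
move=> E [Sf [mSf ->]].
rewrite /rect big_seq.
apply: (@bigsetI_measurable _ (g_sigma_algebraType (Gsys L'))) => i iL.
have := Lmeas_X (sub i iL) measurableT (mSf i); rewrite setTI; exact.
Qed.

Lemma Lmeas_indep L j Z S S' : Lmeas L Z -> uniq (j :: L) ->
  (forall i, i \in j :: L -> Dm i) -> measurable S -> measurable S' ->
  P (X j @^-1` S `&` Z @^-1` S') = P (X j @^-1` S) * P (Z @^-1` S').
Proof.
move=> mZ uL DL mS mS'.
apply: (indep_gen (measurable_funPTI (X j) mS) (@Gsys_I L) (@Gsys_meas L)).
- by move=> E [Sf [mSf ->]]; exact: rect_indep.
- exact: Lmeas_pre.
Qed.

End fam.

Section expo.
Context (R : realType) (mu : R) (mu_gt0 : 0 < mu).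
Let pdf := fun y : R => (exponential_pdf mu y)%:E.
Let mpdf D : measurable_fun D pdf.
Proof. by apply/measurable_EFinP; apply: measurable_funTS; exact: measurable_exponential_pdf. Qed.

Lemma exp_tail (x : R) : 0 <= x -> exponential_prob mu `]x, +oo[ = (expR (- mu * x))%:E.
Proof.
move=> x0.
have h1 := integral_exponential_pdf mu_gt0.
have E1 : [set: R] = `]-oo, 0[ `|` (`[0, x] `|` `]x, +oo[).
  apply/seteqP; split => y //= _.
  have [y0|y0] := ltP y 0%R; first by left; rewrite /= in_itv.
  have [yx|yx] := leP y x; first by right; left; rewrite /= in_itv /= y0 yx.
  by right; right; rewrite /= in_itv /= yx.
pose U1 := `]-oo, 0%R[%classic : set R; pose U2 := `[0%R, x]%classic : set R; pose U3 := `]x, +oo[%classic.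
have h2 : (\int[lebesgue_measure]_(y in U1 `|` (U2 `|` U3)) pdf y = 1)%E.
  by rewrite -E1.
have D1 : [disjoint U1 & U2 `|` U3].
  rewrite /U1 /U2 /U3; apply/disj_setPS => y [] /=; rewrite !in_itv /= => y0 [|].
    by move=> /andP[y0' _]; move: y0; rewrite ltNge y0'.
  by rewrite andbT => xy; move: (lt_trans xy y0); rewrite ltNge x0.
have D2 : [disjoint U2 & U3].
  rewrite /U1 /U2 /U3; apply/disj_setPS => y [] /=; rewrite !in_itv /= => /andP[_ yx]; rewrite andbT => xy.
  by move: (lt_le_trans xy yx); rewrite ltxx.
have mU1 : measurable U1 by exact: measurable_itv.
have mU2 : measurable U2 by exact: measurable_itv.
have mU3 : measurable U3 by exact: measurable_itv.
move: h2; rewrite (@integral_setU _ _ _ lebesgue_measure U1 (U2 `|` U3) pdf mU1 (measurableU _ _ mU2 mU3) (@mpdf (U1 `|` (U2 `|` U3))) D1).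
rewrite (@integral_setU _ _ _ lebesgue_measure U2 U3 pdf mU2 mU3 (@mpdf (U2 `|` U3)) D2).
rewrite (@integral0_eq _ _ _ lebesgue_measure U1 pdf) ?add0e; last first.
  by move=> y; rewrite /U1 /= in_itv /= => y0; rewrite /pdf lt0_exponential_pdf.
have -> : (\int[lebesgue_measure]_(x0 in U2) pdf x0 = 1 - (expR (- mu * x))%:E)%E.
  move: x0; rewrite le_eqVlt => /orP[/eqP ex|x0]; last exact: exponential_prob_itv0c.
  by rewrite /U2 -ex set_itv1 integral_set1 mulr0 expR0 subee.
rewrite /exponential_prob -/pdf.
have I30 : (0 <= \int[lebesgue_measure]_(x0 in U3) pdf x0)%E.
  by apply: integral_ge0 => y _; rewrite lee_fin exponential_pdf_ge0 // ltW.
move: I30; case: (\int[lebesgue_measure]_(x0 in U3) pdf x0)%E => [r| |] // _.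
  by rewrite -EFinB -EFinD => -[h]; congr EFin; lra.
Qed.

End expo.

Section expo2.
Context (R : realType) (mu : R) (mu_gt0 : 0 < mu).
Lemma exp_tail_c (x : R) : 0 <= x -> exponential_prob mu `[x, +oo[ = (expR (- mu * x))%:E.
Proof.
move=> x0; rewrite -exp_tail // /exponential_prob.
rewrite -integral_itv_obnd_cbnd //.
by apply/measurable_EFinP; apply: measurable_funTS; exact: measurable_exponential_pdf.
Qed.
End expo2.

Section tools.
Context d (T : measurableType d) (R : realType) (P : probability T R).

Lemma meas_bool d' (U : measurableType d') (c : U -> bool) :
  measurable_fun setT c -> measurable [set w | c w].
Proof.
move=> mc; have := mc measurableT [set true] I; rewrite setTI.
by congr measurable; apply/seteqP; split => w /=.
Qed.

Lemma int_if (c : T -> bool) : measurable [set w | c w] ->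
  (\int[P]_w (if c w then 1 else 0)%:E = P [set w | c w])%E.
Proof.
move=> mc; rewrite -[in RHS](setIT [set w | c w]) -integral_indic //.
apply: eq_integral => w _; rewrite indicE.
by have [h|h] := boolP (c w); [rewrite mem_set|rewrite memNset //= (negbTE h)].
Qed.

Lemma mif (F : R -> R) : measurable_fun setT F ->
  measurable_fun setT (fun y : R => if 0 < y then F y else 0).
Proof.
move=> mF; apply: measurable_fun_ifT => //.
exact: measurable_fun_ltr.
Qed.

Lemma law_eq (Y1 Y2 : {RV P >-> R}) :
  (forall S, measurable S -> P (Y1 @^-1` S) = P (Y2 @^-1` S)) ->
  forall f : R -> \bar R, measurable_fun setT f -> (forall x, (0 <= f x)%E) ->
  (\int[P]_w f (Y1 w) = \int[P]_w f (Y2 w))%E.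
Proof.
move=> h f mf f0.
have e1 := ge0_integral_distribution Y1 mf f0.
have e2 := ge0_integral_distribution Y2 mf f0.
rewrite /comp in e1 e2; rewrite -e1 -e2.
by apply: eq_measure_integral => S mS _; exact: h.
Qed.

Context (mu : R) (mu_gt0 : 0 < mu).
Variables (Y Z : T -> R) (mY : measurable_fun setT Y) (mZ : measurable_fun setT Z).
Hypothesis ind : forall S S', measurable S -> measurable S' ->
     P (Y @^-1` S `&` Z @^-1` S') = (P (Y @^-1` S) * P (Z @^-1` S'))%E.
Hypothesis Yexp : forall S, measurable S -> P (Y @^-1` S) = exponential_prob mu S.

Lemma tail_freeze s : 0 <= s ->
  P [set w | (0 <= Z w) && (s + Z w < Y w)] =
  (\int[P]_w (if 0 <= Z w then expR (- mu * (s + Z w)) else 0)%:E)%E.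
Proof.
move=> s0.
pose c := fun p : R * R => (0 <= p.2) && (s + p.2 < p.1).
have mc : measurable_fun setT c.
  apply: measurable_and; first exact: measurable_fun_ler.
  apply: measurable_fun_ltr => //; exact: measurable_funD.
have mg : measurable_fun setT (fun p => (if c p then 1 else 0 : R)%:E).
  apply/measurable_EFinP; exact: measurable_fun_ifT.
have mcT : measurable [set w | c (Y w, Z w)].
  apply: meas_bool; apply: (measurableT_comp mc); exact: measurable_fun_pair.
rewrite -(int_if mcT) (freeze mY mZ ind mg); last by move=> p; case: ifP.
apply: eq_integral => v _.
have [z0|z0] := boolP (0 <= Z v); last first.
  by apply: integral0_eq => w _; rewrite /c (negbTE z0).
rewrite (_ : (fun w => _) = fun w => (if s + Z v < Y w then 1 else 0 : R)%:E); last first.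
  by apply/funext => w; rewrite /c z0.
rewrite int_if; last first.
  apply: meas_bool; apply: measurable_fun_ltr => //.
rewrite (_ : [set w | s + Z v < Y w] = Y @^-1` `]s + Z v, +oo[); last first.
  by apply/seteqP; split => w /=; rewrite in_itv /= andbT.
rewrite Yexp // exp_tail //; exact: addr_ge0.
Qed.

Lemma prod_freeze (f h : R -> R) : measurable_fun setT f -> measurable_fun setT h ->
  (forall x, 0 <= f x) -> (forall x, 0 <= h x) ->
  (\int[P]_w (f (Y w) * h (Z w))%:E =
   (\int[P]_w (f (Y w))%:E) * (\int[P]_w (h (Z w))%:E))%E.
Proof.
move=> mf mh f0 h0.
have mg : measurable_fun setT (fun p : R * R => (f p.1 * h p.2)%:E).
  apply/measurable_EFinP; apply: measurable_funM.
    exact: measurableT_comp.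
  exact: measurableT_comp.
rewrite (freeze mY mZ ind mg); last by move=> p; rewrite lee_fin mulr_ge0.
have K0 : (0 <= \int[P]_w (f (Y w))%:E)%E.
  by apply: integral_ge0 => w _; rewrite lee_fin.
have mfY : measurable_fun setT (fun w => (f (Y w))%:E).
  by apply/measurable_EFinP; exact: measurableT_comp.
have mhZ : measurable_fun setT (fun w => (h (Z w))%:E).
  by apply/measurable_EFinP; exact: measurableT_comp.
transitivity (\int[P]_v ((\int[P]_w (f (Y w))%:E) * (h (Z v))%:E))%E.
  apply: eq_integral => v _.
  under eq_integral do rewrite /= mulrC EFinM.
  rewrite ge0_integralZl_EFin //; first by rewrite muleC.
  by move=> w _; rewrite lee_fin.
rewrite ge0_integralZl //.
by move=> w _; rewrite lee_fin.
Qed.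

Lemma meas_expN : measurable_fun setT (fun y : R => expR (- mu * y)).
Proof. apply: measurableT_comp => //; exact: measurable_funM. Qed.

Lemma J_freeze p : 0 <= p ->
  (forall s, 0 <= s -> P [set w | s < Z w] = (p * expR (- mu * s))%:E) ->
  (\int[P]_w (if 0 < Z w then expR (- mu * Z w) else 0)%:E +
   p%:E * \int[P]_w (if 0 < Y w then expR (- mu * Y w) else 0)%:E = p%:E)%E.
Proof.
move=> p0 hZ.
pose c := fun q : R * R => (0 < q.2) && (q.2 <= q.1).
have mc : measurable_fun setT c.
  apply: measurable_and; first exact: measurable_fun_ltr.
  exact: measurable_fun_ler.
pose g := fun q => (if c q then 1 else 0 : R)%:E.
have mg : measurable_fun setT g.
  apply/measurable_EFinP; exact: measurable_fun_ifT.
have g0 q : (0 <= g q)%E by rewrite /g; case: ifP.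
have ind' : forall S S', measurable S -> measurable S' ->
     P (Z @^-1` S `&` Y @^-1` S') = (P (Z @^-1` S) * P (Y @^-1` S'))%E.
  by move=> S S' mS mS'; rewrite setIC ind // muleC.
have mg' : measurable_fun setT (fun q : R * R => g (q.2, q.1)).
  apply: (measurableT_comp mg); exact: measurable_fun_pair.
have E1 : (\int[P]_w g (Y w, Z w) =
    \int[P]_w (if 0 < Z w then expR (- mu * Z w) else 0)%:E)%E.
  rewrite (freeze mY mZ ind mg g0).
  apply: eq_integral => v _.
  have [z0|z0] := boolP (0 < Z v); last first.
    by apply: integral0_eq => w _; rewrite /g /c /= (negbTE z0).
  rewrite (_ : (fun w => _) = fun w => (if Z v <= Y w then 1 else 0 : R)%:E); last first.
    by apply/funext => w; rewrite /g /c /= z0.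
  rewrite int_if; last by apply: meas_bool; exact: measurable_fun_ler.
  rewrite (_ : [set w | Z v <= Y w] = Y @^-1` `[Z v, +oo[); last first.
    by apply/seteqP; split => w /=; rewrite in_itv /= andbT.
  by rewrite Yexp // exp_tail_c // ltW.
have E2 : (\int[P]_w g (Y w, Z w) =
    \int[P]_w (if 0 < Y w then p * (1 - expR (- mu * Y w)) else 0)%:E)%E.
  transitivity (\int[P]_w (fun q : R * R => g (q.2, q.1)) (Z w, Y w))%E; first by [].
  rewrite (freeze mZ mY ind' mg'); last by move=> q; exact: g0.
  apply: eq_integral => v _ /=.
  have [y0|y0] := boolP (0 < Y v); last first.
    apply: integral0_eq => w _; rewrite /g /c /=.
    case: ifP => // /andP[zw wy]; move: y0; rewrite (lt_le_trans zw wy) //.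
  have mA : measurable [set w | (0 < Z w) && (Z w <= Y v)].
    apply: meas_bool; apply: measurable_and; first exact: measurable_fun_ltr.
    exact: measurable_fun_ler.
  rewrite int_if //.
  have mB : measurable [set w | Y v < Z w] by apply: meas_bool; exact: measurable_fun_ltr.
  have eU : [set w | 0 < Z w] = [set w | (0 < Z w) && (Z w <= Y v)] `|` [set w | Y v < Z w].
    apply/seteqP; split => w /=.
      move=> zw; have [wy|wy] := leP (Z w) (Y v); first by left; apply/andP; split.
      by right.
    by move=> [/andP[]//|]; apply: lt_trans.
  have dU : [disjoint [set w | (0 < Z w) && (Z w <= Y v)] & [set w | Y v < Z w]].
    apply/disj_setPS => w [/= /andP[_ wy] yw].
    by move: (le_lt_trans wy yw); rewrite ltxx.
  have h0 := hZ 0 (lexx 0); rewrite mulr0 expR0 mulr1 in h0.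
  have h2 := hZ _ (ltW y0).
  have eq3 : P [set w | 0 < Z w] = (P [set w | ((0 < Z w) && (Z w <= Y v))%R] + P [set w | (Y v < Z w)%R])%E.
    rewrite [in LHS]eU measureU //.
    by apply/disj_set2P.
  move: eq3; rewrite h0 h2.
  move: (P [set w | (0 < Z w) && (Z w <= Y v)]) (measure_ge0 P [set w | (0 < Z w) && (Z w <= Y v)]) => [r| |] //= _.
  by rewrite -EFinD => -[h1]; congr EFin; lra.
rewrite -E1 E2.
have mY1 : measurable_fun setT (fun w => (if 0 < Y w then p * (1 - expR (- mu * Y w)) else 0)%:E).
  have mF1 : measurable_fun setT (fun y : R => p * (1 - expR (- mu * y))).
    by apply: measurable_funM => //; apply: measurable_funB => //; exact: meas_expN.
  by apply/measurable_EFinP; exact: (measurableT_comp (mif mF1) mY).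
have mY2 : measurable_fun setT (fun w => (if 0 < Y w then expR (- mu * Y w) else 0)%:E).
  by apply/measurable_EFinP; exact: (measurableT_comp (mif meas_expN) mY).
rewrite -ge0_integralZl_EFin //; last first.
  by move=> w _; case: ifP => // _; rewrite lee_fin expR_ge0.
have n1 : forall w, [set: T] w ->
    (0 <= (if 0 < Y w then p * (1 - expR (- mu * Y w)) else 0)%:E)%E.
  move=> w _; case: ifPn => // y0; rewrite lee_fin mulr_ge0 // subr_ge0.
  by rewrite expR_le1 nmulr_rle0 // ?oppr_lt0 // ltW.
have n2 : forall w, [set: T] w ->
    (0 <= p%:E * (if 0 < Y w then expR (- mu * Y w) else 0)%:E)%E.
  by move=> w _; rewrite -EFinM lee_fin; case: ifP => // _; rewrite mulr_ge0 // expR_ge0.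
have m2 : measurable_fun setT (fun w => p%:E * (if 0 < Y w then expR (- mu * Y w) else 0)%:E)%E.
  by apply: emeasurable_funM => //; exact: measurable_cst.
rewrite -(ge0_integralD _ measurableT n1 mY1 n2 m2).
transitivity (\int[P]_w (p%:E * (if 0 < Y w then 1 else 0)%:E))%E.
  apply: eq_integral => w _; rewrite -!EFinM -EFinD.
  by case: ifP => _; congr EFin; ring.
have m3 : measurable_fun setT (fun w => (if 0 < Y w then 1 else 0 : R)%:E).
  by apply/measurable_EFinP; apply: measurable_fun_ifT => //; exact: measurable_fun_ltr.
rewrite ge0_integralZl_EFin //; last by move=> w _; case: ifP.
rewrite int_if; last by apply: meas_bool; exact: measurable_fun_ltr.
rewrite (_ : [set w | 0 < Y w] = Y @^-1` `]0, +oo[); last first.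
  by apply/seteqP; split => w /=; rewrite in_itv /= andbT.
by rewrite Yexp // exp_tail // mulr0 expR0 mule1.
Qed.

End tools.

Section main.
Context d (T : measurableType d) (R : realType)
  (P : probability T R) (A B : nat -> {RV P >-> R}) (mu : R)
  (mu_gt0 : 0 < mu)
  (A_ge0 : forall n x, (1 <= n)%N -> 0 <= A n x)
  (A_id : forall n, (1 <= n)%N -> forall S : set R, measurable S ->
     distribution P (A n) S = distribution P (A 1%N) S)
  (B_exp : forall n, (1 <= n)%N -> forall S : set R, measurable S ->
     distribution P (B n) S = exponential_prob mu S)
  (indep : mutually_independent (fun i => (1 <= idx i)%N) (AB_family A B)).

Local Notation X := (AB_family A B).

Definition Lk (k : nat) : seq (nat + nat) :=
  map inl (iota 1 k.+1) ++ map inr (iota 2 k.+1).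

Lemma inl_inj : injective (@inl nat nat). Proof. by move=> x y [->]. Qed.
Lemma inr_inj : injective (@inr nat nat). Proof. by move=> x y [->]. Qed.

Lemma inl_Lk k i : (inl i \in Lk k) = (1 <= i <= k.+1)%N.
Proof.
rewrite mem_cat (mem_map inl_inj) mem_iota.
have -> : (inl i \in map inr (iota 2 k.+1)) = false.
  by apply/negbTE/mapP => -[].
by rewrite orbF addSn add0n ltnS.
Qed.

Lemma inr_Lk k i : (inr i \in Lk k) = (2 <= i <= k.+2)%N.
Proof.
rewrite mem_cat (mem_map inr_inj) mem_iota.
have -> : (inr i \in map inl (iota 1 k.+1)) = false.
  by apply/negbTE/mapP => -[].
by rewrite /= addSn addSn add0n ltnS.
Qed.

Lemma uniq_Lk k : uniq (Lk k).
Proof.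
rewrite /Lk cat_uniq (map_inj_uniq inl_inj) (map_inj_uniq inr_inj) !iota_uniq andbT andTb.
by apply/hasPn => x /mapP[y _ ->]; apply/mapP => -[].
Qed.

Lemma D_Lk k i : i \in Lk k -> (1 <= idx i)%N.
Proof.
case: i => i; [rewrite inl_Lk|rewrite inr_Lk] => /andP[h _] //=.
exact: leq_trans h.
Qed.

Fixpoint qq (k : nat) : T -> R :=
  match k with
  | 0 => fun x => maxr 0 (B 2 x - A 1 x)
  | k'.+1 => fun x => if 0 < qq k' x then maxr 0 (B k'.+3 x - A k'.+2 x - qq k' x) else 0
  end.

Lemma LM_qq k : Lmeas X (Lk k) (qq k).
Proof.
elim: k => [|k IH] /=.
  apply: measurable_maxr => //; apply: measurable_funB.
    by apply: (@Lmeas_X _ _ _ _ _ X _ (inr 2)); rewrite inr_Lk.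
  by apply: (@Lmeas_X _ _ _ _ _ X _ (inl 1)); rewrite inl_Lk.
have IH' : Lmeas X (Lk k.+1) (qq k).
  have sub : {subset Lk k <= Lk k.+1}.
    move=> [] i.
      by rewrite !inl_Lk => /andP[-> /leqW ->].
    by rewrite !inr_Lk => /andP[-> /leqW ->].
  exact: (Lmeas_mono sub IH).
have hb : (inr k.+3 : nat + nat) \in Lk k.+1.
  by rewrite inr_Lk; apply/andP; split; lia.
have ha : (inl k.+2 : nat + nat) \in Lk k.+1.
  by rewrite inl_Lk; apply/andP; split; lia.
have mb : Lmeas X (Lk k.+1) (B k.+3) := Lmeas_X hb.
have ma : Lmeas X (Lk k.+1) (A k.+2) := Lmeas_X ha.
apply: measurable_fun_ifT.
- exact: measurable_fun_ltr.
- apply: measurable_maxr => //; apply: measurable_funB => //.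
  exact: measurable_funB.
- exact: measurable_cst.
Qed.

Lemma indX L j Z : Lmeas X L Z -> uniq (j :: L) ->
  (forall i, i \in j :: L -> (1 <= idx i)%N) ->
  forall S S', measurable S -> measurable S' ->
  P (X j @^-1` S `&` Z @^-1` S') = (P (X j @^-1` S) * P (Z @^-1` S'))%E.
Proof. by move=> hZ u D S S' mS mS'; exact: (Lmeas_indep indep hZ u D mS mS'). Qed.

Let al := LST P (A 1%N) mu.

Lemma mexpE : measurable_fun setT (fun y : R => (expR (- mu * y))%:E).
Proof. by apply/measurable_EFinP; exact: meas_expN. Qed.

Lemma EA1 : (\int[P]_w (expR (- mu * A 1%N w))%:E)%E = al%:E.
Proof.
rewrite /al /LST unlock fineK //.
have f0 : forall w, [set: T] w -> (0 <= (expR (- mu * A 1%N w))%:E)%E.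
  by move=> w _; rewrite lee_fin expR_ge0.
have mf : measurable_fun setT (fun w => (expR (- mu * A 1%N w))%:E).
  by apply/measurable_EFinP; exact: (measurableT_comp (meas_expN mu) (measurable_funPT (A 1%N))).
have le1 : (\int[P]_w (expR (- mu * A 1%N w))%:E <= \int[P]_w (cst 1%E w))%E.
  apply: ge0_le_integral => //.
  move=> w _; rewrite lee_fin expR_le1 mulNr oppr_le0 mulr_ge0 //; first exact: ltW.
  exact: A_ge0.
have e1 : (\int[P]_w (cst 1%E w) = 1)%E.
  by rewrite integral_cst // mul1e; exact: probability_setT.
rewrite e1 in le1.
rewrite ge0_fin_numE; first by apply: (le_lt_trans le1); exact: ltey.
by apply: integral_ge0.
Qed.

Lemma EA n : (1 <= n)%N -> (\int[P]_w (expR (- mu * A n w))%:E)%E = al%:E.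
Proof.
move=> n1; rewrite -EA1.
apply: (@law_eq _ _ _ P (A n) (A 1%N) _ (fun y => (expR (- mu * y))%:E) mexpE).
- by move=> S mS; exact: A_id.
- by move=> y; rewrite lee_fin expR_ge0.
Qed.

Lemma exp_gt n s : (1 <= n)%N -> 0 <= s ->
  P [set w | s < B n w] = (expR (- mu * s))%:E.
Proof.
move=> n1 s0.
rewrite (_ : [set w | s < B n w] = B n @^-1` `]s, +oo[); last first.
  by apply/seteqP; split => w /=; rewrite in_itv /= andbT.
by have := B_exp n1 (measurable_itv `]s, +oo[); rewrite /distribution /pushforward => ->; rewrite exp_tail.
Qed.

Let cc := (\int[P]_w (if 0 < B 1%N w then expR (- mu * B 1%N w) else 0)%:E)%E.

Lemma cc_law n : (1 <= n)%N ->
  (\int[P]_w (if 0 < B n w then expR (- mu * B n w) else 0)%:E)%E = cc.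
Proof.
move=> n1.
apply: (@law_eq _ _ _ P (B n) (B 1%N) _ (fun y => (if 0 < y then expR (- mu * y) else 0)%:E)).
- move=> S mS; have := B_exp n1 mS; have := B_exp (leqnn 1) mS.
  by rewrite /distribution /pushforward => -> ->.
- by apply/measurable_EFinP; exact: (mif (meas_expN mu)).
- by move=> y; case: ifP => // _; rewrite lee_fin expR_ge0.
Qed.

Lemma cc_half : cc = (2^-1)%:E.
Proof.
have ind : forall S S', measurable S -> measurable S' ->
    P (B 2 @^-1` S `&` B 1%N @^-1` S') = (P (B 2 @^-1` S) * P (B 1%N @^-1` S'))%E.
  apply: (@indX [:: inr 1%N] (inr 2) (B 1%N)) => //.
    by apply: (@Lmeas_X _ _ _ _ _ X [:: inr 1%N] (inr 1%N)); rewrite inE.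
  by move=> i; rewrite !inE => /orP[/eqP->|/eqP->].
have Yexp : forall S, measurable S -> P (B 2 @^-1` S) = exponential_prob mu S.
  by move=> S mS; exact: (B_exp _ mS).
have hZ : forall s, 0 <= s -> P [set w | s < B 1%N w] = (1 * expR (- mu * s))%:E.
  by move=> s s0; rewrite mul1r exp_gt.
have := J_freeze mu_gt0 (measurable_funPT (B 2)) (measurable_funPT (B 1%N)) ind Yexp ler01 hZ.
rewrite -/cc cc_law // mul1e.
have c0 : (0 <= cc)%E by apply: integral_ge0 => w _; case: ifP => // _; rewrite lee_fin expR_ge0.
move: c0; case: cc => [r| |] // _.
by rewrite -EFinD => -[h]; congr EFin; lra.
Qed.

Lemma lt_max0 (s v : R) : 0 <= s -> (s < maxr 0 v) = (s < v).
Proof. by move=> s0; rewrite lt_max ltNge s0. Qed.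

Lemma al_ge0 : 0 <= al.
Proof.
have : (0 <= \int[P]_w (expR (- mu * A 1%N w))%:E)%E.
  by apply: integral_ge0 => w _; rewrite lee_fin expR_ge0.
by rewrite EA1 lee_fin.
Qed.

Lemma qtail k : forall s, 0 <= s ->
  P [set w | s < qq k w] = (al * (al / 2) ^+ k * expR (- mu * s))%:E.
Proof.
elim: k => [|k IH] s s0.
  have E : [set w | s < qq 0 w] = [set w | (0 <= A 1%N w) && (s + A 1%N w < B 2 w)].
    apply/seteqP; split => w /=; rewrite lt_max0 // A_ge0 //=.
      by move=> h; lra.
    by move=> h; lra.
  have ind : forall S S', measurable S -> measurable S' ->
      P (B 2 @^-1` S `&` A 1%N @^-1` S') = (P (B 2 @^-1` S) * P (A 1%N @^-1` S'))%E.
    apply: (@indX [:: inl 1%N] (inr 2) (A 1%N)) => //.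
      by apply: (@Lmeas_X _ _ _ _ _ X [:: inl 1%N] (inl 1%N)); rewrite inE.
    by move=> i; rewrite !inE => /orP[/eqP->|/eqP->].
  have Yexp : forall S, measurable S -> P (B 2 @^-1` S) = exponential_prob mu S.
    by move=> S mS; exact: (B_exp _ mS).
  rewrite E (tail_freeze mu_gt0 (measurable_funPT (B 2)) (measurable_funPT (A 1%N)) ind Yexp s0).
  transitivity (\int[P]_w ((expR (- mu * s))%:E * (expR (- mu * A 1%N w))%:E))%E.
    apply: eq_integral => w _; rewrite A_ge0 // -EFinM -expRD; congr (EFin (expR _)); ring.
  have n0 : forall w, [set: T] w -> (0 <= (expR (- mu * A 1%N w))%:E)%E.
    by move=> w _; rewrite lee_fin expR_ge0.
  have m0 : measurable_fun setT (fun w => (expR (- mu * A 1%N w))%:E).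
    by apply/measurable_EFinP; exact: (measurableT_comp (meas_expN mu) (measurable_funPT (A 1%N))).
  rewrite (ge0_integralZl_EFin P measurableT n0 m0 (expR_ge0 _)).
  by rewrite EA1 -EFinM expr0 mulr1 mulrC.
pose q := qq k.
pose Zk := fun w => if 0 < q w then A k.+2 w + q w else -1.
have E : [set w | s < qq k.+1 w] = [set w | (0 <= Zk w) && (s + Zk w < B k.+3 w)].
  apply/seteqP; split => w /=; rewrite /Zk -/q; case: ifPn => q0.
  - rewrite lt_max0 // => h; apply/andP; split; last lra.
    by apply: addr_ge0; [exact: A_ge0|exact: ltW].
  - by move=> h; lra.
  - by rewrite lt_max0 // => /andP[_ h]; lra.
  - by move=> /andP[h _]; lra.
pose L1 := inl k.+2 :: Lk k.
have sub1 : {subset Lk k <= L1} by move=> i iL; rewrite inE iL orbT.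
have hLq : Lmeas X L1 q := Lmeas_mono sub1 (@LM_qq k).
have hLa : Lmeas X L1 (A k.+2) by apply: (@Lmeas_X _ _ _ _ _ X L1 (inl k.+2)); exact: mem_head.
have LZ : Lmeas X L1 Zk.
  apply: measurable_fun_ifT => //.
  - exact: measurable_fun_ltr.
  - exact: measurable_funD.
have nr : (inr k.+3 : nat + nat) \notin Lk k by rewrite inr_Lk; apply/negP => /andP[_]; lia.
have nl : (inl k.+2 : nat + nat) \notin Lk k by rewrite inl_Lk; apply/negP => /andP[_]; lia.
have u1 : uniq (inr k.+3 :: L1).
  by rewrite cons_uniq inE negb_or nr andbT cons_uniq nl uniq_Lk.
have D1 : forall i, i \in inr k.+3 :: L1 -> (1 <= idx i)%N.
  by move=> i; rewrite !inE => /orP[/eqP->//|/orP[/eqP->//|/D_Lk]].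
have ind1 := indX LZ u1 D1.
have Yexp : forall S, measurable S -> P (B k.+3 @^-1` S) = exponential_prob mu S.
  by move=> S mS; exact: (B_exp _ mS).
rewrite E (tail_freeze mu_gt0 (measurable_funPT (B k.+3)) (Lmeas_T LZ) ind1 Yexp s0).
pose hq := fun y : R => if 0 < y then expR (- mu * y) else 0.
have hq0 y : 0 <= hq y by rewrite /hq; case: ifP => // _; exact: expR_ge0.
transitivity (\int[P]_w ((expR (- mu * s))%:E * (expR (- mu * A k.+2 w) * hq (q w))%:E))%E.
  apply: eq_integral => w _; rewrite /Zk /hq; have [q0|q0] := boolP (0 < q w).
    rewrite ifT; last by apply: addr_ge0; [exact: A_ge0|exact: ltW].
    by rewrite -EFinM -!expRD; congr (EFin (expR _)); ring.
  have -> : (0 <= -1 :> R) = false by apply/negbTE; rewrite -ltNge ltrN10.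
  by rewrite mulr0 mule0.
have n0 : forall w, [set: T] w -> (0 <= (expR (- mu * A k.+2 w) * hq (q w))%:E)%E.
  by move=> w _; rewrite lee_fin mulr_ge0 // expR_ge0.
have mhq : measurable_fun setT hq by exact: (mif (meas_expN mu)).
have mq : measurable_fun setT q := Lmeas_T (@LM_qq k).
have m0 : measurable_fun setT (fun w => (expR (- mu * A k.+2 w) * hq (q w))%:E).
  apply/measurable_EFinP; apply: measurable_funM.
    exact: (measurableT_comp (meas_expN mu) (measurable_funPT (A k.+2))).
  exact: (measurableT_comp mhq mq).
rewrite (ge0_integralZl_EFin P measurableT n0 m0 (expR_ge0 _)).
have u3 : uniq (inl k.+2 :: Lk k) by rewrite cons_uniq nl uniq_Lk.
have D3 : forall i, i \in inl k.+2 :: Lk k -> (1 <= idx i)%N.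
  by move=> i; rewrite !inE => /orP[/eqP->//|/D_Lk].
have ind3 := indX (@LM_qq k) u3 D3.
have := prod_freeze (measurable_funPT (A k.+2)) mq ind3 (meas_expN mu) mhq (fun y => expR_ge0 _) hq0.
rewrite /= => ->.
rewrite EA //.
have u2 : uniq (inr k.+3 :: Lk k) by rewrite cons_uniq nr uniq_Lk.
have D2 : forall i, i \in inr k.+3 :: Lk k -> (1 <= idx i)%N.
  by move=> i; rewrite !inE => /orP[/eqP->//|/D_Lk].
have ind2 := indX (@LM_qq k) u2 D2.
have p0 : 0 <= al * (al / 2) ^+ k.
  apply: mulr_ge0; first exact: al_ge0.
  by apply: exprn_ge0; apply: divr_ge0 => //; exact: al_ge0.
have J := J_freeze mu_gt0 (measurable_funPT (B k.+3)) mq ind2 Yexp p0 IH.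
rewrite cc_law // cc_half in J.
have J0 : (0 <= \int[P]_w (hq (q w))%:E)%E by apply: integral_ge0 => w _; rewrite lee_fin.
move: J J0; rewrite /hq; case: (\int[P]_w _)%E => [r| |] //.
rewrite -EFinM -EFinD => -[h] _; rewrite -!EFinM; congr EFin.
rewrite exprS.
have -> : r = al * (al / 2) ^+ k / 2 by lra.
ring.
Qed.

Local Notation W' x i := (Wshift (fun k => A k : T -> R) (fun k => B k : T -> R) x i).

Lemma W'_ge0 x i : 0 <= W' x i.
Proof. by case: i => [|i] //=; rewrite le_max lexx. Qed.

Lemma rel_a k x : 0 < qq k x ->
  qq k x = W' x k.+1 /\ (forall i, (1 <= i <= k.+1)%N -> W' x i != 0).
Proof.
elim: k => [|k IH] /=.
  rewrite subr0 => h; split => // i /andP[i1 i2].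
  have -> : i = 1%N by apply/eqP; rewrite eqn_leq i1 i2.
  by rewrite /= subr0 gt_eqF.
case: ifPn => [q0 h|_]; last by rewrite ltxx.
have [e1 e2] := IH q0; rewrite e1 in h *.
split => // i /andP[i1]; rewrite leq_eqVlt => /orP[/eqP->|]; first by rewrite gt_eqF.
by rewrite ltnS => i2; apply: e2; rewrite i1 i2.
Qed.

Lemma rel_b k x : (forall i, (1 <= i <= k.+1)%N -> W' x i != 0) -> 0 < qq k x.
Proof.
elim: k => [|k IH] h /=.
  have := h 1%N isT; rewrite /= subr0 => h1.
  by rewrite lt_neqAle eq_sym h1 le_max lexx.
have q0 : 0 < qq k x.
  apply: IH => i /andP[i1 i2]; apply: h; rewrite i1 /=; exact: leqW.
rewrite q0; have [e1 _] := rel_a q0; rewrite e1.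
have := h k.+2; rewrite /= ltnS leqnn => /(_ isT) hk.
by rewrite lt_neqAle eq_sym hk le_max lexx.
Qed.

Lemma meas_qpos k : measurable [set x | 0 < qq k x].
Proof.
apply: meas_bool; apply: measurable_fun_ltr => //.
exact: (Lmeas_T (@LM_qq k)).
Qed.

Lemma P_qpos k : P [set x | 0 < qq k x] = (al * (al / 2) ^+ k)%:E.
Proof. by rewrite qtail // mulr0 expR0 mulr1. Qed.

Lemma main_result n : (1 <= n)%N ->
    P (cycle_len_eq (fun k => A k : T -> R) (fun k => B k : T -> R) n) =
    (if n == 1%N then 1 - al
     else (1 - al / 2) * (al / 2) ^+ (n - 2) * al)%:E.
Proof.
case: n => [//|[|m]] _.
  have -> : cycle_len_eq (fun k => A k : T -> R) (fun k => B k : T -> R) 1 =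
      ~` [set x | 0 < qq 0 x].
    apply/seteqP; split => x /=.
      move=> [h _] hq; have [e1 _] := @rel_a 0 x hq; move: hq; rewrite [maxr _ _]e1.
      have h' : W' x 1 = 0 := h.
      by rewrite h' ltxx.
    move=> hq; split => [|k /andP[k1 k2]]; last by exfalso; lia.
    change (W' x 1 = 0).
    have := W'_ge0 x 1; rewrite le_eqVlt => /orP[/eqP <-//|h1]; exfalso; apply: hq.
    apply: (@rel_b 0 x) => i /andP[i1 i2].
    have -> : i = 1%N by apply/eqP; rewrite eqn_leq i1 i2.
    by rewrite gt_eqF.
  transitivity (1 - P [set x | (0 < qq 0 x)%R])%E; first exact: probability_setC (meas_qpos 0).
  by rewrite P_qpos expr0 mulr1.
have -> : cycle_len_eq (fun k => A k : T -> R) (fun k => B k : T -> R) m.+2 =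
    [set x | 0 < qq m x] `\` [set x | 0 < qq m.+1 x].
  apply/seteqP; split => x.
    move=> [h1 h2]; split.
      apply: (@rel_b m x) => i /andP[i1 i2]; apply/eqP; apply: (h2 i).
      by rewrite i1 ltnS.
    move=> hq; have [_ e2] := @rel_a m.+1 x hq.
    have hm : (1 <= m.+2 <= m.+2)%N by apply/andP; split; lia.
    by move: (e2 m.+2 hm) => /eqP; apply.
  move=> [hq hq']; have [_ e2] := @rel_a m x hq; split.
    change (W' x m.+2 = 0).
    have := W'_ge0 x m.+2; rewrite le_eqVlt => /orP[/eqP <-//|h3]; exfalso; apply: hq'.
    apply: (@rel_b m.+1 x) => i /andP[i1]; rewrite leq_eqVlt => /orP[/eqP->|].
      by rewrite gt_eqF.
    by rewrite ltnS => i2; apply: e2; rewrite i1 i2.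
  move=> k /andP[k1 k2]; apply/eqP; apply: e2.
  by rewrite k1 -ltnS.
have sub : [set x | 0 < qq m.+1 x] `<=` [set x | 0 < qq m x].
  move=> x hq; have [_ e2] := @rel_a m.+1 x hq.
  apply: (@rel_b m x) => i /andP[i1 i2]; apply: e2; rewrite i1 /=; exact: leqW.
transitivity (P [set x | (0 < qq m x)%R] - P [set x | (0 < qq m.+1 x)%R])%E.
  have eD : P ([set x | (0 < qq m x)%R] `\` [set x | (0 < qq m.+1 x)%R]) =
      (P [set x | (0 < qq m x)%R] - P ([set x | (0 < qq m x)%R] `&` [set x | (0 < qq m.+1 x)%R]))%E.
    rewrite measureD //; [exact: meas_qpos|exact: meas_qpos|].
    by apply: (le_lt_trans (probability_le1 P (meas_qpos m))); exact: ltey.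
  by rewrite eD setIidr.
rewrite !P_qpos -EFinB /= subSS subSS subn0; congr EFin.
rewrite exprS; ring.
Qed.

End main.

Unset Implicit Arguments.

Theorem theorem3p3 (d : measure_display) (T : measurableType d) (R : realType)
  (P : probability T R) (A B : nat -> {RV P >-> R}) (mu : R)
  (mu_gt0 : 0 < mu)
  (A_ge0 : forall n x, (1 <= n)%N -> 0 <= A n x)
  (A_id : forall n, (1 <= n)%N -> forall S : set R, measurable S ->
     distribution P (A n) S = distribution P (A 1%N) S)
  (B_exp : forall n, (1 <= n)%N -> forall S : set R, measurable S ->
     distribution P (B n) S = exponential_prob mu S)
  (indep : mutually_independent (fun i => (1 <= idx i)%N) (AB_family A B)) :
  forall n : nat, (1 <= n)%N ->
    P (cycle_len_eq (fun k => A k : T -> R) (fun k => B k : T -> R) n) =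
    (if n == 1%N then 1 - LST P (A 1%N) mu
     else (1 - LST P (A 1%N) mu / 2) * (LST P (A 1%N) mu / 2) ^+ (n - 2)
          * LST P (A 1%N) mu)%:E.
Proof.
move=> n n1.
exact: (main_result mu_gt0 A_ge0 A_id B_exp indep n1).
Qed.
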